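(* Let $V$ be a ground model, $\kappa$ an infinite cardinal, $\mathbb{A}\in V$ a Boolean algebra, and let $\dot{\mathcal{U}}_n$ ($n\in\omega$), $\dot{\mathcal{U}}$ be $\mathbb{M}_\kappa$-names for ultrafilters on $\mathbb{A}$, with $\varphi_n=\varphi_{\dot{\mathcal{U}}_n}$ and $\varphi=\varphi_{\dot{\mathcal{U}}}$. If $(\varphi_n)$ converges uniformly to $\varphi$, then for all but finitely many $n$ there is a condition $p_n\in\mathbb{M}_\kappa\setminus\{0\}$ such that $p_n\Vdash\dot{\mathcal{U}}_n=\dot{\mathcal{U}}$.
   Context: $\mathbb{M}_\kappa$ is the measure algebra $Bor(2^\kappa)/\mathcal{N}_\kappa$ of the standard product measure $\lambda_\kappa$ on $2^\kappa$, used as a forcing notion (conditions are nonzero elements). For an $\mathbb{M}_\kappa$-name $\dot{\mathcal{U}}$ with $\Vdash$ ''$\dot{\mathcal{U}}$ is an ultrafilter on $\mathbb{A}$'', $\varphi_{\dot{\mathcal{U}}}\colon\mathbb{A}\to\mathbb{M}_\kappa$ is the homomorphism $\varphi_{\dot{\mathcal{U}}}(A)=\llbracket A\in\dot{\mathcal{U}}\rrbracket$. $(\varphi_n)$ converges uniformly to $\varphi$ if for every $\varepsilon>0$ there is $N$ with $\lambda_\kappa(\varphi_n(A)\triangle\varphi(A))<\varepsilon$ for all $n>N$ and all $A\in\mathbb{A}$. *)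

(* Defs.v *)
From HB Require Import structures.
From mathcomp Require Import all_boot all_order all_algebra.
From mathcomp Require Import all_classical all_reals all_analysis.
Set Implicit Arguments. Unset Strict Implicit. Unset Printing Implicit Defensive.
Import Order.TTheory GRing.Theory Num.Theory.
Local Open Scope classical_set_scope.
Local Open Scope ring_scope.

Definition cyl_gen (K : choiceType) : set (set (K -> bool)) :=
  range (fun i : K => [set x : K -> bool | x i]).

Definition cantor_cube (K : choiceType) := g_sigma_algebraType (@cyl_gen K).

(* mu is the standard product measure lambda_K on 2^K: every finite cylinder
   fixing |s| coordinates has measure 2^{-|s|}.  (This determines mu uniquely
   on the generated sigma-algebra, by the pi-lambda theorem.) *)
Definition is_product_measure (R : realType) (K : choiceType)
  (mu : {measure set (cantor_cube K) -> \bar R}) : Prop :=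
  forall (s : seq K) (b : K -> bool), uniq s ->
    mu [set x : cantor_cube K | forall i, i \in s -> (x : K -> bool) i = b i]
      = ((2%:R^-1) ^+ size s)%:E.

Definition symd {T} (A B : set T) : set T := (A `\` B) `|` (B `\` A).

(* a.e.-equality: equality in the measure algebra Bor/N *)
Definition ae_eqset (R : realType) (K : choiceType)
  (mu : {measure set (cantor_cube K) -> \bar R}) (A B : set (cantor_cube K)) :=
  mu (symd A B) = 0%E.

(* phi : A -> M_K is a Boolean homomorphism into the measure algebra M_K,
   elements of M_K being represented by measurable sets modulo mu-null sets. *)
Definition is_hom_to_measure_algebra (R : realType) (K : choiceType)
  (mu : {measure set (cantor_cube K) -> \bar R})
  (d : Order.disp_t) (BA : ctbDistrLatticeType d)
  (phi : BA -> set (cantor_cube K)) : Prop :=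
  [/\ forall a, measurable (phi a),
      forall a b, ae_eqset mu (phi (Order.meet a b)) (phi a `&` phi b),
      forall a b, ae_eqset mu (phi (Order.join a b)) (phi a `|` phi b),
      forall a, ae_eqset mu (phi (Order.compl a)) (~` phi a) &
      ae_eqset mu (phi Order.bottom) set0 /\
        ae_eqset mu (phi Order.top) setT].

Definition unif_conv (R : realType) (K : choiceType)
  (mu : {measure set (cantor_cube K) -> \bar R})
  (d : Order.disp_t) (BA : ctbDistrLatticeType d)
  (phi_ : nat -> BA -> set (cantor_cube K)) (phi : BA -> set (cantor_cube K)) :=
  forall eps : R, 0 < eps -> exists N : nat, forall n, (N < n)%N ->
    forall a : BA, (mu (symd (phi_ n a) (phi a)) < eps%:E)%E.

(* p ||- "U_psi = U_phi", where p is a condition (a measurable set of positive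
   measure, i.e. a nonzero element of M_K): since A is in the ground model,
   [[U_psi = U_phi]] = /\_{a in A} [[a in U_psi <-> a in U_phi]]
                     = /\_{a} -(psi a Delta phi a), so p forces the equality iff
   p /\ (psi a Delta phi a) = 0 in M_K for every a. *)
Definition forces_eq (R : realType) (K : choiceType)
  (mu : {measure set (cantor_cube K) -> \bar R})
  (d : Order.disp_t) (BA : ctbDistrLatticeType d)
  (p : set (cantor_cube K)) (psi phi : BA -> set (cantor_cube K)) : Prop :=
  forall a : BA, mu (p `&` symd (psi a) (phi a)) = 0%E.

(* Main.v *)
Require Import Defs.
From HB Require Import structures.
From mathcomp Require Import all_boot all_order all_algebra.
From mathcomp Require Import all_classical all_reals all_analysis.
From mathcomp Require Import ring lra.
Import Order.TTheory GRing.Theory Num.Theory.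
Local Open Scope classical_set_scope.
Local Open Scope ring_scope.

Lemma mU d (T : ringOfSetsType d) (A B : set T) :
  measurable A -> measurable B -> measurable (A `|` B).
Proof. exact: measurableU. Qed.
Lemma mI d (T : ringOfSetsType d) (A B : set T) :
  measurable A -> measurable B -> measurable (A `&` B).
Proof. exact: measurableI. Qed.
Arguments mU {d T A B}. Arguments mI {d T A B}.

Section Aux.
Context (R : realType) (K : choiceType) (mu : {measure set (cantor_cube K) -> \bar R}).
Hypothesis mu1 : mu setT = 1%E.
Local Notation T := (cantor_cube K).

Definition mm (A : set T) : R := fine (mu A).

Lemma muE A : measurable A -> mu A = (mm A)%:E.
Proof.
move=> mA; rewrite /mm fineK // ge0_fin_numE ?measure_ge0 //.
apply: (@le_lt_trans _ _ (mu setT)); last by rewrite mu1 ltry.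
by rewrite le_measure ?inE.
Qed.

Lemma mm_ge0 A : 0 <= mm A.
Proof. by rewrite /mm fine_ge0 // measure_ge0. Qed.

Lemma mm_le {A B} : measurable A -> measurable B -> A `<=` B -> mm A <= mm B.
Proof.
move=> mA mB AB; rewrite -lee_fin -!muE //.
by rewrite le_measure ?inE.
Qed.

Lemma mm_add {A B} : measurable A -> measurable B -> A `&` B = set0 ->
  mm (A `|` B) = mm A + mm B.
Proof.
move=> mA mB AB; apply: EFin_inj; rewrite EFinD -!muE //; last exact: mU.
by rewrite measureU.
Qed.

Lemma mm_sub {A B} : measurable A -> measurable B -> mm (A `|` B) <= mm A + mm B.
Proof.
move=> mA mB; rewrite -lee_fin EFinD -!muE //; last exact: mU.
exact: measureU2.
Qed.

Lemma mm0 : mm set0 = 0.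
Proof. by rewrite /mm measure0. Qed.

Lemma mm_null {N} : mu N = 0%E -> mm N = 0.
Proof. by rewrite /mm => ->. Qed.

Definition aeq (A B : set T) := exists N, (measurable N /\ mu N = 0%E) /\
  forall x, ~ N x -> (A x <-> B x).

Lemma aeq_pt A B : (forall x, A x <-> B x) -> aeq A B.
Proof. move=> h; exists set0; split; [split => //; exact: measure0|by move=> x _]. Qed.

Lemma aeq_sym {A B} : aeq A B -> aeq B A.
Proof. by move=> [N [hN h]]; exists N; split => // x /h; tauto. Qed.

Lemma aeq2 A B C D :
  aeq A B -> aeq C D ->
  exists N, (measurable N /\ mu N = 0%E) /\ forall x, ~ N x -> (A x <-> B x) /\ (C x <-> D x).
Proof.
move=> [N1 [[m1 n1] h1]] [N2 [[m2 n2] h2]]; exists (N1 `|` N2); split.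
  by split; [exact: mU|exact: null_set_setU].
by move=> x hx; split; [apply: h1|apply: h2] => hh; apply: hx; [left|right].
Qed.

Arguments aeq2 {A B C D}.

Lemma aeq_trans {A B C} : aeq A B -> aeq B C -> aeq A C.
Proof.
move=> h1 h2; have [N [hN h]] := aeq2 h1 h2.
by exists N; split => // x /h; tauto.
Qed.

Lemma aeqI {A B C D} : aeq A B -> aeq C D -> aeq (A `&` C) (B `&` D).
Proof.
move=> h1 h2; have [N [hN h]] := aeq2 h1 h2.
by exists N; split => // x /h /=; tauto.
Qed.

Lemma aeqU {A B C D} : aeq A B -> aeq C D -> aeq (A `|` C) (B `|` D).
Proof.
move=> h1 h2; have [N [hN h]] := aeq2 h1 h2.
by exists N; split => // x /h /=; tauto.
Qed.

Lemma aeqC {A B} : aeq A B -> aeq (~` A) (~` B).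
Proof. by move=> [N [hN h]]; exists N; split => // x /h /=; tauto. Qed.

Lemma aeqD {A B C D} : aeq A B -> aeq C D -> aeq (A `\` C) (B `\` D).
Proof.
move=> h1 h2; have [N [hN h]] := aeq2 h1 h2.
by exists N; split => // x /h /=; tauto.
Qed.

Lemma aeq_symd {A B C D} : aeq A B -> aeq C D -> aeq (symd A C) (symd B D).
Proof. by move=> h1 h2; rewrite /symd; apply: aeqU; apply: aeqD. Qed.

Lemma aeq_mm {A B} : measurable A -> measurable B -> aeq A B -> mm A = mm B.
Proof.
have H : forall A B, measurable A -> measurable B -> aeq A B -> mm A <= mm B.
  move=> A' B' mA mB [N [[mN N0] h]].
  have sub : A' `<=` B' `|` N.
    move=> x Ax; case: (pselect (N x)) => Nx; [by right|left; exact/(h x Nx)].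
  apply: (le_trans (mm_le mA (mU mB mN) sub)).
  by apply: (le_trans (mm_sub mB mN)); rewrite (mm_null N0) addr0.
move=> mA mB h; apply/eqP; rewrite eq_le !H //; exact: aeq_sym.
Qed.

Lemma ae_aeq {A B} : measurable A -> measurable B -> ae_eqset mu A B -> aeq A B.
Proof.
move=> mA mB h; exists (symd A B); split.
  by split => //; apply: mU; apply: measurableD.
move=> x hx; rewrite /symd /= in hx.
case: (pselect (A x)); case: (pselect (B x)); tauto.
Qed.


Lemma split_mm A B C : measurable B -> measurable C -> A = B `|` C ->
  B `&` C = set0 -> mm A = mm B + mm C.
Proof. by move=> mB mC -> BC; rewrite mm_add. Qed.

Section Key.
Context (d : Order.disp_t) (BA : ctbDistrLatticeType d) (psi phi : BA -> set T).
Hypotheses (hpsi : is_hom_to_measure_algebra mu psi)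
  (hphi : is_hom_to_measure_algebra mu phi).

Definition bxor (a b : BA) : BA :=
  Order.join (Order.meet a (Order.compl b)) (Order.meet (Order.compl a) b).

Lemma hom_xor (f : BA -> set T) : is_hom_to_measure_algebra mu f ->
  forall a b, aeq (f (bxor a b)) ((f a `&` ~` f b) `|` (~` f a `&` f b)).
Proof.
move=> [hm hI hU hC _] a b; rewrite /bxor.
apply: aeq_trans (ae_aeq (hm _) (mU (hm _) (hm _)) (hU _ _)) _.
apply: aeqU.
- apply: aeq_trans (ae_aeq (hm _) (mI (hm _) (hm _)) (hI _ _)) _.
  apply: aeqI; first exact: aeq_pt.
  exact: (ae_aeq (hm _) (measurableC (hm _)) (hC _)).
- apply: aeq_trans (ae_aeq (hm _) (mI (hm _) (hm _)) (hI _ _)) _.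
  apply: aeqI; last exact: aeq_pt.
  exact: (ae_aeq (hm _) (measurableC (hm _)) (hC _)).
Qed.

Definition S a := symd (psi a) (phi a).

Lemma mS a : measurable (S a).
Proof.
case: hpsi => hm1 _ _ _ _; case: hphi => hm2 _ _ _ _.
by apply: mU; apply: measurableD.
Qed.

Lemma S_xor c a : aeq (S (bxor c a)) (symd (S c) (S a)).
Proof.
rewrite /S; apply: aeq_trans (aeq_symd (hom_xor _ hpsi c a) (hom_xor _ hphi c a)) _.
apply: aeq_pt => x; rewrite /symd /=.
case: (pselect (psi c x)); case: (pselect (psi a x));
case: (pselect (phi c x)); case: (pselect (phi a x)); tauto.
Qed.

Definition U (l : seq BA) := foldr (fun a acc => S a `|` acc) set0 l.

Lemma mUl l : measurable (U l).
Proof. by elim: l => [|a l IH] /=; [exact: measurable0|exact: mU (mS a) IH]. Qed.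

Lemma U_cat l1 l2 : U (l1 ++ l2) = U l1 `|` U l2.
Proof. by elim: l1 => [|a l IH] /=; rewrite ?set0U // IH setUA. Qed.

Lemma key l : forall Z, measurable Z ->
  exists c, mm (U l `\` Z) <= 2 * mm (S c `\` Z).
Proof.
elim: l => [|a l IH] Z mZ.
  by exists Order.bottom; rewrite /= set0D mm0 mulr_ge0 // mm_ge0.
have [c hc] := IH (Z `|` S a) (mU mZ (mS a)).
have mX := mS c; have mY := mS a; have mUl' := mUl l.
have E1 : mm (U (a :: l) `\` Z) = mm (S a `\` Z) + mm (U l `\` (Z `|` S a)).
  apply: split_mm; [exact: measurableD|exact: measurableD (mUl l) (mU mZ mY)|..].
    apply/seteqP; split => x /=;
    case: (pselect (S a x)); case: (pselect (U l x)); case: (pselect (Z x)); tauto.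
  apply/seteqP; split => x /=; last by [].
  case: (pselect (S a x)); case: (pselect (U l x)); case: (pselect (Z x)); tauto.
have E2 : mm (S c `\` Z) = mm (S c `\` (Z `|` S a)) + mm ((S c `&` S a) `\` Z).
  apply: split_mm; [exact: measurableD mX (mU mZ mY)|exact: measurableD (mI mX mY) mZ|..].
    apply/seteqP; split => x /=;
    case: (pselect (S a x)); case: (pselect (S c x)); case: (pselect (Z x)); tauto.
  apply/seteqP; split => x /=; last by [].
  case: (pselect (S a x)); case: (pselect (S c x)); case: (pselect (Z x)); tauto.
have E3 : mm (symd (S c) (S a) `\` Z) =
    mm (S c `\` (Z `|` S a)) + mm ((S a `\` S c) `\` Z).
  apply: split_mm; [exact: measurableD mX (mU mZ mY)|exact: measurableD (measurableD mY mX) mZ|..].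
    apply/seteqP; rewrite /symd; split => x /=;
    case: (pselect (S a x)); case: (pselect (S c x)); case: (pselect (Z x)); tauto.
  apply/seteqP; split => x /=; last by [].
  case: (pselect (S a x)); case: (pselect (S c x)); case: (pselect (Z x)); tauto.
have E4 : mm (S a `\` Z) = mm ((S c `&` S a) `\` Z) + mm ((S a `\` S c) `\` Z).
  apply: split_mm; [exact: measurableD (mI mX mY) mZ|exact: measurableD (measurableD mY mX) mZ|..].
    apply/seteqP; split => x /=;
    case: (pselect (S a x)); case: (pselect (S c x)); case: (pselect (Z x)); tauto.
  apply/seteqP; split => x /=; last by [].
  case: (pselect (S a x)); case: (pselect (S c x)); case: (pselect (Z x)); tauto.
have E5 : mm (S (bxor c a) `\` Z) = mm (symd (S c) (S a) `\` Z).
  apply: aeq_mm; [exact: measurableD (mS _) mZ|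
    by apply: measurableD mZ; apply: mU; apply: measurableD|].
  by apply: aeqD; [exact: S_xor|exact: aeq_pt].
case: (lerP (mm (S c `\` Z)) (mm (S (bxor c a) `\` Z))) => h.
  by exists (bxor c a); lra.
by exists c; lra.
Qed.


Lemma finish : (forall a, (mu (symd (psi a) (phi a)) < (4^-1)%:E)%E) ->
  exists p : set T, [/\ measurable p, (0 < mu p)%E & forces_eq mu p psi phi].
Proof.
move=> hS0.
have hS a : mm (S a) < 4^-1 by rewrite -lte_fin -muE //; [exact: hS0|exact: mS].
have fin l : mm (U l) <= 2^-1.
  have [c hc] := key l _ measurable0; rewrite !setD0 in hc.
  by have := hS c; lra.
pose E := [set r | exists l, r = mm (U l)].
have hE : has_sup E.
  split; first by exists (mm (U [::])); exists [::].
  by exists 2^-1 => r [l ->]; exact: fin.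
pose s := sup E.
have hL : forall k : nat, exists l, s - k.+1%:R^-1 < mm (U l).
  move=> k; have kp : 0 < k.+1%:R^-1 :> R by rewrite invr_gt0 ltr0Sn.
  by have [e [l ->] h] := sup_adherent kp hE; exists l.
case: (choice hL) => L hLk.
pose LL := fix LL k := if k is k'.+1 then LL k' ++ L k else L 0%N.
pose F k := U (LL k).
have mF k : measurable (F k) by exact: mUl.
have ndF : nondecreasing_seq F.
  move=> n m; elim: m => [|m IH]; first by rewrite leqn0 => /eqP ->.
  rewrite leq_eqVlt => /orP [/eqP -> //|]; rewrite ltnS => /IH h.
  apply: le_trans h _; rewrite /F /= U_cat; exact: leUl.
have LF k : U (L k) `<=` F k.
  by case: k => [|k] //=; rewrite /F /= U_cat; exact: subsetUr.
pose D := \bigcup_k F k.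
have mD : measurable D by exact: bigcupT_measurable.
have muD : (mu D <= (2^-1)%:E)%E.
  have cv := nondecreasing_cvg_mu (mu:=mu) mF mD ndF.
  rewrite -(cvg_lim _ cv) //; apply: lime_le; first by apply/cvg_ex; exists (mu D).
  by apply: nearW => k /=; rewrite muE // lee_fin; exact: fin.
have hb a : mu (S a `\` D) = 0%E.
  have mSD : measurable (S a `\` D) by exact: measurableD (mS a) mD.
  have m0 : mm (S a `\` D) = 0.
    case: (ltrP 0 (mm (S a `\` D))) => pos; last by apply/eqP; rewrite eq_le pos mm_ge0.
    have [k hk] := ltr_add_invr pos; rewrite add0r in hk.
    have h1 : mm (S a `\` D) <= mm (S a `\` U (L k)).
      apply: mm_le mSD (measurableD (mS a) (mUl _)) _.
      move=> x [Sx nD]; split=> // hx; apply: nD; exists k => //; exact: LF.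
    have h2 : mm (U (a :: L k)) = mm (U (L k)) + mm (S a `\` U (L k)).
      apply: split_mm; [exact: mUl|exact: measurableD (mS a) (mUl _)| |].
        apply/seteqP; split => x /=;
        case: (pselect (S a x)); case: (pselect (U (L k) x)); tauto.
      apply/seteqP; split => x /=; last by [].
      case: (pselect (S a x)); case: (pselect (U (L k) x)); tauto.
    have h3 : mm (U (a :: L k)) <= s by apply: sup_upper_bound hE _ _; exists (a :: L k).
    have h4 := hLk k.
    have h6 : True by [].
    have h5 : mm (S a `\` U (L k)) <= s - mm (U (L k)) by rewrite h2 in h3; lra.
    move: hk h4 h6; set e := (k.+1%:R^-1 : R); clearbody e => hk h4 h6.
    have h7 : mm (S a `\` U (L k)) < e by lra.
    have : mm (S a `\` D) < mm (S a `\` D) by lra.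
    by rewrite ltxx.
  by rewrite muE // m0.
exists (~` D); split.
- exact: measurableC.
- have e1 : mm setT = mm D + mm (~` D).
    by apply: split_mm; [exact: mD|exact: measurableC|rewrite setUCr|rewrite setICr].
  have e2 : mm setT = 1 by rewrite /mm mu1.
  have e3 : mm D <= 2^-1 by rewrite -lee_fin -muE.
  rewrite muE ?lte_fin; last exact: measurableC.
  lra.
- by move=> a; rewrite setIC -setDE; exact: hb.
Qed.

End Key.

End Aux.

Theorem theorem7p5 (R : realType) (K : choiceType)
  (hK : infinite_set (@setT K))
  (mu : {measure set (cantor_cube K) -> \bar R})
  (hmu : is_product_measure mu)
  (d : Order.disp_t) (BA : ctbDistrLatticeType d)
  (phi_ : nat -> BA -> set (cantor_cube K)) (phi : BA -> set (cantor_cube K))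
  (hphi_ : forall n, is_hom_to_measure_algebra mu (phi_ n))
  (hphi : is_hom_to_measure_algebra mu phi) :
  unif_conv mu phi_ phi ->
  exists N : nat, forall n, (N <= n)%N ->
    exists p : set (cantor_cube K),
      [/\ measurable p, (0 < mu p)%E & forces_eq mu p (phi_ n) phi].
Proof.
move=> hu.
have mu1 : mu setT = 1%E.
  have := hmu [::] (fun _ => true) isT; rewrite expr0.
  have -> : [set x : cantor_cube K | forall i, i \in [::] -> (x : K -> bool) i = true] = setT.
    by apply/seteqP; split => x //= _ i; rewrite in_nil.
  by [].
have q4 : 0 < 4^-1 :> R by rewrite invr_gt0.
have [N hN] := hu (4^-1) q4.
exists N.+1 => n hn.
apply: (@finish R K mu mu1 d BA (phi_ n) phi (hphi_ n) hphi).
by move=> a; exact: hN.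
Qed.
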